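(* Fix $\epsilon\in(0,1)$ and let $\theta(n)=\epsilon$ for all $n$. Then for all sufficiently large $n$ and every $\rho\in[0,c]$, the quantities $$T_i=\frac{e^{\rho i}\,b^{\binom i2}\,k^2\,a!^2}{n^i\,i!\,(a-i)!^2}$$ satisfy $T_i\le n^{-c_5}$ for all $3\le i\le\lceil n/k\rceil-1$, and $T_i\le n^{1-c_5}$ for $i\in\{2,\lceil n/k\rceil\}$.
   Context: Let $p\in(0,1)$ be constant, $q=1-p$, $b=1/q$, $\log$ natural logarithm, $\gamma=2\log_b n-2\log_b\log_b n-2\log_b 2$, $\Delta=\gamma-\lfloor\gamma\rfloor$, $a=\lfloor\gamma\rfloor+1$, and $x_0=x_0(n)$ the smallest nonnegative $x$ with $(1-\Delta+x)\log_b(1-\Delta+x)+(1-\Delta)(\Delta-x)/2\le0$. Let $k=\lceil n/(\gamma-x_0-\epsilon)\rceil$. Let $c_2=-\frac{(1-\epsilon)\log(1-\epsilon)}{\epsilon}\in(0,1)$, $c=\frac{1-c_2}{2}\in(0,\frac12)$, and $c_5=\min\{\frac1{10},\frac{c}{2\log b},\frac{1-c}{2\log b}\}$. *)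

(* Defs.v *)
From Stdlib Require Import Reals Lra Lia ZArith.
Open Scope R_scope.

(* floor and ceiling via Stdlib's [up] (IZR (up x) > x, IZR (up x) - x <= 1) *)
Definition Rfloor (x : R) : Z := (up x - 1)%Z.
Definition Rceil (x : R) : Z := (- Rfloor (- x))%Z.

Definition bb (p : R) : R := / (1 - p).
Definition logb (p x : R) : R := ln x / ln (bb p).

Definition gam (p : R) (n : nat) : R :=
  2 * logb p (INR n) - 2 * logb p (logb p (INR n)) - 2 * logb p 2.
Definition Delta (p : R) (n : nat) : R := gam p n - IZR (Rfloor (gam p n)).
Definition aZ (p : R) (n : nat) : Z := (Rfloor (gam p n) + 1)%Z.

(* the function whose smallest nonnegative zero-crossing defines x_0 *)
Definition x0fun (p : R) (n : nat) (x : R) : R :=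
  (1 - Delta p n + x) * logb p (1 - Delta p n + x)
  + (1 - Delta p n) * (Delta p n - x) / 2.

Definition is_x0 (p : R) (n : nat) (x : R) : Prop :=
  0 <= x /\ x0fun p n x <= 0 /\
  (forall y, 0 <= y -> x0fun p n y <= 0 -> x <= y).

Definition kZ (p eps x0 : R) (n : nat) : Z := Rceil (INR n / (gam p n - x0 - eps)).

Definition c2 (eps : R) : R := - ((1 - eps) * ln (1 - eps)) / eps.
Definition cc (eps : R) : R := (1 - c2 eps) / 2.
Definition c5 (p eps : R) : R :=
  Rmin (1/10) (Rmin (cc eps / (2 * ln (bb p))) ((1 - cc eps) / (2 * ln (bb p)))).

Definition Tq (p rho : R) (n k a i : nat) : R :=
  exp (rho * INR i) * (bb p) ^ ((i * (i - 1)) / 2) * (INR k) ^ 2 * (INR (fact a)) ^ 2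
  / ((INR n) ^ i * INR (fact i) * (INR (fact (a - i))) ^ 2).

(* Main.v *)
Require Import Defs.
From Stdlib Require Import Reals Lra Lia ZArith.
From Stdlib Require Import Psatz.
Require Import Defs.
Open Scope R_scope.

Lemma ln_le_xm1 x : 0 < x -> ln x <= x - 1.
Proof. intro H. pose proof (exp_ineq1_le (ln x)). rewrite exp_ln in H0; lra. Qed.

Lemma ln_lt_xm1 x : 0 < x -> x <> 1 -> ln x < x - 1.
Proof. intros H H1. assert (ln x <> 0). { apply ln_neq_0; auto. }
  pose proof (exp_ineq1 (ln x) H0). rewrite exp_ln in H2; lra. Qed.



Lemma half_exact i : INR ((i * (i - 1)) / 2) = INR i * (INR i - 1) / 2.
Proof.
  destruct i as [|i]. simpl. lra.
  assert (E: exists q, (S i * (S i - 1) = 2 * q)%nat).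
  { replace (S i - 1)%nat with i by lia.
    destruct (Nat.Even_or_Odd i) as [[q Hq]|[q Hq]].
    - exists (S i * q)%nat. lia.
    - exists ((q+1) * i)%nat. lia. }
  destruct E as [q Hq]. rewrite Hq.
  replace (2 * q)%nat with (q * 2)%nat by lia. rewrite Nat.div_mul by lia.
  assert (INR (S i * (S i - 1)) = INR (2*q)) by (rewrite Hq; auto).
  rewrite mult_INR, minus_INR, mult_INR in H by lia.
  change (INR 1) with 1 in H. change (INR 2) with 2 in H. lra.
Qed.
Lemma fact_le1 d i : (fact (d + i) <= fact i * (d + i) ^ d)%nat.
Proof.
  induction d as [|d IH]. simpl. lia.
  replace (S d + i)%nat with (S (d+i)) by lia.
  change (fact (S (d+i))) with (S (d+i) * fact (d+i))%nat.
  rewrite Nat.pow_succ_r'.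
  assert ((d + i) ^ d <= (S (d+i)) ^ d)%nat by (apply Nat.pow_le_mono_l; lia).
  transitivity (S (d+i) * (fact i * (d+i)^d))%nat.
  apply Nat.mul_le_mono_l; auto.
  transitivity (S (d+i) * (fact i * (S (d+i))^d))%nat.
  apply Nat.mul_le_mono_l; apply Nat.mul_le_mono_l; auto. lia.
Qed.

Lemma fact_le2 d i : (fact (d + i) <= (d + i) ^ i * fact d)%nat.
Proof.
  induction i as [|i IH]. rewrite Nat.add_0_r; simpl; lia.
  replace (d + S i)%nat with (S (d+i)) by lia.
  change (fact (S (d+i))) with (S (d+i) * fact (d+i))%nat.
  rewrite Nat.pow_succ_r'.
  assert ((d + i) ^ i <= (S (d+i)) ^ i)%nat by (apply Nat.pow_le_mono_l; lia).
  transitivity (S (d+i) * ((d+i)^i * fact d))%nat.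
  apply Nat.mul_le_mono_l; auto.
  transitivity (S (d+i) * ((S (d+i))^i * fact d))%nat.
  apply Nat.mul_le_mono_l; apply Nat.mul_le_mono_r; auto. lia.
Qed.

Lemma exp_le x y : x <= y -> exp x <= exp y.
Proof. intros [H|H]. left; apply exp_increasing; auto. subst; lra. Qed.

Lemma ln_le x y : 0 < x -> x <= y -> ln x <= ln y.
Proof. intros H [H1|H1]. left; apply ln_increasing; auto. subst; lra. Qed.

Lemma ln_div x y : 0 < x -> 0 < y -> ln (x / y) = ln x - ln y.
Proof. intros; unfold Rdiv; rewrite ln_mult, ln_Rinv; try lra. apply Rinv_0_lt_compat; auto. Qed.

Lemma fact_upper i : (1 <= i)%nat ->
  INR (fact i) <= exp ((INR i + 1) * ln (INR i) + 1 - INR i).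
Proof.
  induction i as [|i IH]; intro Hi. lia.
  destruct (Nat.eq_dec i 0) as [->|Hi0].
  { simpl. rewrite ln_1. replace ((1+1)*0+1-1) with 0 by ring. rewrite exp_0. lra. }
  assert (Hi1 : (1 <= i)%nat) by lia. specialize (IH Hi1).
  assert (Hx: 1 <= INR i) by (apply (le_INR 1); lia).
  change (fact (S i)) with (S i * fact i)%nat. rewrite mult_INR, S_INR.
  assert (Hl: ln (INR i) - ln (INR i + 1) <= - / (INR i + 1)).
  { rewrite <- ln_div by lra. pose proof (ln_le_xm1 (INR i / (INR i + 1))).
    assert (INR i / (INR i + 1) - 1 = - / (INR i + 1)) by (field; lra).
    assert (0 < INR i / (INR i + 1)) by (apply Rdiv_lt_0_compat; lra). lra. }
  assert (Hl2: (INR i + 1) * ln (INR i) + 1 <= (INR i + 1) * ln (INR i + 1)).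
  { assert ((INR i + 1) * (ln (INR i) - ln (INR i + 1)) <= (INR i + 1) * (- / (INR i+1))).
    apply Rmult_le_compat_l; lra. 
    replace ((INR i + 1) * - / (INR i + 1)) with (-1) in H by (field; lra). lra. }
  rewrite <- (exp_ln (INR i + 1)) at 1 by lra.
  apply Rle_trans with (exp (ln (INR i + 1)) * exp ((INR i + 1) * ln (INR i) + 1 - INR i)).
  apply Rmult_le_compat_l. left; apply exp_pos. exact IH.
  rewrite <- exp_plus. apply exp_le. lra.
Qed.

Definition Hf (rho lam lnN la lk x : R) :=
  rho*x + x*(x-1)/2*lam + 2*lk + 2*x*la - x*lnN.
Definition Gf (rho lam lnN a la lk x : R) :=
  rho*x + x*(x-1)/2*lam + 2*lk + 2*(a-x)*la + (x+1)*(la + x/a - 1) - x + 1 - x*lnN.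

Lemma pow_exp x n : 0 < x -> x ^ n = exp (INR n * ln x).
Proof. intro H. rewrite <- Rpower_pow by auto. reflexivity. Qed.

Lemma Tq_gen p rho n k a i X : 0 < p < 1 -> (1 <= n)%nat -> (1 <= k)%nat ->
  INR (fact a) ^ 2 / (INR (fact i) * INR (fact (a - i)) ^ 2) <= X ->
  Tq p rho n k a i <=
  exp (rho * INR i + INR i * (INR i - 1) / 2 * ln (bb p) + 2 * ln (INR k) - INR i * ln (INR n)) * X.
Proof.
  intros Hp Hn Hk HX.
  assert (Hb : 0 < bb p) by (unfold bb; apply Rinv_0_lt_compat; lra).
  assert (HN : 0 < INR n) by (apply lt_0_INR; lia).
  assert (HK : 0 < INR k) by (apply lt_0_INR; lia).
  unfold Tq.
  rewrite (pow_exp (bb p)), (pow_exp (INR k)), (pow_exp (INR n)) by auto.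
  rewrite half_exact. change (INR 2) with 2.
  pose proof (INR_fact_lt_0 i). pose proof (INR_fact_lt_0 (a-i)). pose proof (INR_fact_lt_0 a).
  replace (exp (rho * INR i) * exp (INR i * (INR i - 1) / 2 * ln (bb p)) * exp (2 * ln (INR k)) *
     INR (fact a) ^ 2 / (exp (INR i * ln (INR n)) * INR (fact i) * INR (fact (a - i)) ^ 2))
   with (exp (rho * INR i) * exp (INR i * (INR i - 1) / 2 * ln (bb p)) * exp (2 * ln (INR k)) /
          exp (INR i * ln (INR n)) * (INR (fact a) ^ 2 / (INR (fact i) * INR (fact (a - i)) ^ 2))).
  2:{ field. repeat split; try apply Rgt_not_eq; try apply exp_pos; auto.
 }
  replace (rho * INR i + INR i * (INR i - 1) / 2 * ln (bb p) + 2 * ln (INR k) - INR i * ln (INR n))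
    with (rho * INR i + INR i * (INR i - 1) / 2 * ln (bb p) + 2 * ln (INR k) + - (INR i * ln (INR n))) by ring.
  rewrite !exp_plus, exp_Ropp.
  apply Rmult_le_compat_l; auto.
  left. unfold Rdiv. repeat apply Rmult_lt_0_compat; try apply exp_pos. apply Rinv_0_lt_compat, exp_pos.
Qed.

Lemma X_H a i : (1 <= a)%nat -> (i <= a)%nat ->
  INR (fact a) ^ 2 / (INR (fact i) * INR (fact (a - i)) ^ 2) <= exp (2 * INR i * ln (INR a)).
Proof.
  intros Ha Hi.
  pose proof (fact_le2 (a - i) i) as F. replace (a - i + i)%nat with a in F by lia.
  apply le_INR in F. rewrite mult_INR, pow_INR in F.
  assert (HA : 0 < INR a) by (apply lt_0_INR; lia).
  pose proof (INR_fact_lt_0 i). pose proof (INR_fact_lt_0 (a-i)). pose proof (INR_fact_lt_0 a).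
  assert (HF1 : 1 <= INR (fact i)) by (apply (le_INR 1); pose proof (lt_O_fact i); lia).
  replace (2 * INR i * ln (INR a)) with (INR (2*i) * ln (INR a)) by (rewrite mult_INR; simpl; ring).
  rewrite <- pow_exp by auto. rewrite pow_mult.
  apply Rle_trans with (INR (fact a) ^ 2 / INR (fact (a - i)) ^ 2).
  { unfold Rdiv. apply Rmult_le_compat_l. nra.
    rewrite Rinv_mult. rewrite <- (Rmult_1_l (/ INR (fact (a - i)) ^ 2)) at 2.
    apply Rmult_le_compat_r. left; apply Rinv_0_lt_compat, pow_lt; auto.
    rewrite <- Rinv_1. apply Rinv_le_contravar; lra. }
  apply Rle_trans with ((INR a ^ i * INR (fact (a - i))) ^ 2 / INR (fact (a - i)) ^ 2).
  { unfold Rdiv. apply Rmult_le_compat_r. left; apply Rinv_0_lt_compat, pow_lt; auto.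
    apply pow_incr. lra. }
  right. rewrite <- pow_mult, Nat.mul_comm, pow_mult. field. lra.
Qed.

Lemma X_G a i : (1 <= i)%nat -> (i <= a)%nat ->
  INR (fact a) ^ 2 / (INR (fact i) * INR (fact (a - i)) ^ 2) <=
  exp (2 * (INR a - INR i) * ln (INR a) + (INR i + 1) * (ln (INR a) + INR i / INR a - 1) + 1 - INR i).
Proof.
  intros Hi1 Hi.
  pose proof (fact_le1 (a - i) i) as F. replace (a - i + i)%nat with a in F by lia.
  apply le_INR in F. rewrite mult_INR, pow_INR in F.
  assert (HA : 0 < INR a) by (apply lt_0_INR; lia).
  assert (HI : 0 < INR i) by (apply lt_0_INR; lia).
  pose proof (INR_fact_lt_0 i). pose proof (INR_fact_lt_0 (a-i)). pose proof (INR_fact_lt_0 a).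
  assert (HB1 : 1 <= INR (fact (a-i))) by (apply (le_INR 1); pose proof (lt_O_fact (a-i)); lia).
  apply Rle_trans with (INR (fact a) ^ 2 / INR (fact i)).
  { unfold Rdiv. apply Rmult_le_compat_l. nra.
    rewrite Rinv_mult. rewrite <- (Rmult_1_r (/ INR (fact i))) at 2.
    apply Rmult_le_compat_l. left; apply Rinv_0_lt_compat; auto.
    rewrite <- Rinv_1. apply Rinv_le_contravar. lra. rewrite <- (pow1 2). apply pow_incr. lra. }
  apply Rle_trans with ((INR (fact i) * INR a ^ (a - i)) ^ 2 / INR (fact i)).
  { unfold Rdiv. apply Rmult_le_compat_r. left; apply Rinv_0_lt_compat; auto.
    apply pow_incr. lra. }
  replace ((INR (fact i) * INR a ^ (a - i)) ^ 2 / INR (fact i)) with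
    (INR (fact i) * INR a ^ (2 * (a - i))) by (rewrite Nat.mul_comm, pow_mult; field; lra).
  rewrite pow_exp by auto. rewrite mult_INR, minus_INR by lia. change (INR 2) with 2.
  replace (2 * (INR a - INR i) * ln (INR a) + (INR i + 1) * (ln (INR a) + INR i / INR a - 1) + 1 - INR i)
    with (((INR i + 1) * (ln (INR a) + INR i / INR a - 1) + 1 - INR i) + 2 * (INR a - INR i) * ln (INR a)) by ring.
  rewrite exp_plus. replace (2 * (INR a - INR i) * ln (INR a)) with ((2 * (INR a - INR i)) * ln (INR a)) by ring.
  apply Rmult_le_compat_r. left; apply exp_pos.
  apply Rle_trans with (1 := fact_upper i Hi1). apply exp_le.
  assert (ln (INR i) - ln (INR a) <= INR i / INR a - 1).
  { rewrite <- ln_div by auto. apply ln_le_xm1. apply Rdiv_lt_0_compat; auto. }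
  nra.
Qed.

Lemma Tq_H p rho n k a i : 0 < p < 1 -> (1 <= n)%nat -> (1 <= k)%nat -> (1 <= a)%nat -> (i <= a)%nat ->
  Tq p rho n k a i <= exp (Hf rho (ln (bb p)) (ln (INR n)) (ln (INR a)) (ln (INR k)) (INR i)).
Proof.
  intros. eapply Rle_trans. apply Tq_gen; eauto. apply X_H; auto.
  rewrite <- exp_plus. apply exp_le. unfold Hf. lra.
Qed.

Lemma Tq_G p rho n k a i : 0 < p < 1 -> (1 <= n)%nat -> (1 <= k)%nat -> (1 <= i)%nat -> (i <= a)%nat ->
  Tq p rho n k a i <= exp (Gf rho (ln (bb p)) (ln (INR n)) (INR a) (ln (INR a)) (ln (INR k)) (INR i)).
Proof.
  intros. eapply Rle_trans. apply Tq_gen; eauto. apply X_G; auto.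
  rewrite <- exp_plus. apply exp_le. unfold Gf. lra.
Qed.

Lemma quad_max (f : R -> R) al be c0 u v x K :
  0 <= al -> (forall y, f y = al * y * y + be * y + c0) ->
  u <= x <= v -> f u <= K -> f v <= K -> f x <= K.
Proof.
  intros Hal Hf Hx Hu Hv. rewrite Hf in *.
  destruct (Req_dec u v) as [E|E]. { subst. assert (x = v) by lra. subst; auto. }
  assert (Hvu : 0 < v - u) by lra.
  assert (Q: (al * x * x + be * x + c0) * (v - u) =
     (v - x) * (al * u * u + be * u + c0) + (x - u) * (al * v * v + be * v + c0)
     + al * (x - u) * (x - v) * (v - u)) by ring.
  assert (al * (x - u) * (x - v) * (v - u) <= 0).
  { assert (0 <= al * (x-u)) by nra. assert (0 <= al * (x-u) * (v-x)) by nra. nra. }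
  assert ((v - x) * (al * u * u + be * u + c0) <= (v-x) * K) by (apply Rmult_le_compat_l; lra).
  assert ((x - u) * (al * v * v + be * v + c0) <= (x-u) * K) by (apply Rmult_le_compat_l; lra).
  assert ((al * x * x + be * x + c0) * (v - u) <= K * (v - u)) by nra.
  apply Rmult_le_reg_r with (v - u); lra.
Qed.

Lemma Hf_quad rho lam lnN la lk : forall y,
  Hf rho lam lnN la lk y = (lam/2) * y * y + (rho - lam/2 + 2*la - lnN) * y + 2 * lk.
Proof. intros y; unfold Hf. field. Qed.

Lemma Gf_quad rho lam lnN a la lk : a <> 0 -> forall y,
  Gf rho lam lnN a la lk y = (lam/2 + /a) * y * y + (rho - lam/2 - 2*la + (la - 1) + /a - 1 - lnN) * y
    + (2*lk + 2*a*la + la).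
Proof. intros Ha y; unfold Gf. field. exact Ha. Qed.

Lemma Rfloor_spec x : IZR (Rfloor x) <= x < IZR (Rfloor x) + 1.
Proof. unfold Rfloor. rewrite minus_IZR. destruct (archimed x). simpl. lra. Qed.

Lemma Rceil_spec x : x <= IZR (Rceil x) < x + 1.
Proof. unfold Rceil. rewrite opp_IZR. destruct (Rfloor_spec (-x)). lra. Qed.

Lemma Delta_range p n : 0 <= Delta p n < 1.
Proof. unfold Delta. destruct (Rfloor_spec (gam p n)). lra. Qed.

Lemma bb_gt1 p : 0 < p < 1 -> 1 < bb p.
Proof. intro. unfold bb. rewrite <- Rinv_1. apply Rinv_lt_contravar; lra. Qed.

Lemma lam_pos p : 0 < p < 1 -> 0 < ln (bb p).
Proof. intro. rewrite <- ln_1. apply ln_increasing. lra. apply bb_gt1; auto. Qed.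

Lemma x0_le_Delta p n x : 0 < p < 1 -> is_x0 p n x -> x <= Delta p n.
Proof.
  intros Hp [H0 [H1 H2]]. apply H2. apply Delta_range.
  unfold x0fun. replace (1 - Delta p n + Delta p n) with 1 by ring.
  unfold logb. rewrite ln_1. replace (Delta p n - Delta p n) with 0 by ring. lra.
Qed.

Lemma x0_bound p eps n x : 0 < p < 1 -> 0 < eps < 1 -> is_x0 p n x -> x + eps < Delta p n ->
  (1 - Delta p n) * ln (bb p) <= 2 * c2 eps.
Proof.
  intros Hp He [H0 [H1 H2]] Hx.
  pose proof (Delta_range p n) as HD. pose proof (lam_pos p Hp) as Hl.
  set (D := Delta p n) in *. set (lam := ln (bb p)) in *.
  set (t := 1 - D + x). set (u := 1 - eps).
  assert (Ht : 0 < t < u) by (unfold t, u; lra).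
  unfold x0fun, logb in H1. fold D lam t in H1.
  assert (E1 : t * ln t + lam * (1 - D) * (1 - t) / 2 <= 0).
  { replace (D - x) with (1 - t) in H1 by (unfold t; ring).
    assert (lam * (t * (ln t / lam) + (1 - D) * (1 - t) / 2) <= 0).
    { rewrite <- (Rmult_0_r lam). apply Rmult_le_compat_l; lra. }
    replace (lam * (t * (ln t / lam) + (1 - D) * (1 - t) / 2)) with
      (t * ln t + lam * (1 - D) * (1 - t) / 2) in H by (field; lra). lra. }
  assert (Tg : t * ln t >= t * ln u + t - u).
  { assert (ln (u / t) <= u / t - 1) by (apply ln_le_xm1; apply Rdiv_lt_0_compat; lra).
    rewrite ln_div in H by lra.
    assert (t * (ln u - ln t) <= t * (u / t - 1)) by (apply Rmult_le_compat_l; lra).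
    replace (t * (u / t - 1)) with (u - t) in H3 by (field; lra). lra. }
  assert (Lu : ln u <= u - 1) by (apply ln_le_xm1; lra).
  assert (Chi : - t * ln t * eps <= - u * ln u * (1 - t)).
  { assert (Hu : u = 1 - eps) by reflexivity. clearbody u t.
    assert ((1 - u) * (t * ln t) >= (1-u) * (t * ln u + t - u)) by (apply Rmult_ge_compat_l; lra).
    assert (0 <= (u - t) * (u - 1 - ln u)) by (apply Rmult_le_pos; lra).
    nra. }
  assert (Hc2 : c2 eps * eps = - u * ln u) by (unfold c2, u; field; lra).
  assert (eps * (t * ln t + lam * (1 - D) * (1 - t) / 2) <= 0).
  { rewrite <- (Rmult_0_r eps). apply Rmult_le_compat_l; lra. }
  assert (lam * (1 - D) * ((1 - t) * eps) <= 2 * c2 eps * ((1 - t) * eps)).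
  { assert (c2 eps * eps * (1 - t) = - u * ln u * (1 - t)) by (rewrite Hc2; ring). nra. }
  assert (0 < (1 - t) * eps) by (apply Rmult_lt_0_compat; unfold u in Ht; lra).
  apply Rmult_le_reg_r with ((1 - t) * eps); auto. lra.
Qed.

Lemma c2_range eps : 0 < eps < 1 -> 0 < c2 eps < 1.
Proof.
  intros He. unfold c2.
  assert (Hl : ln (1 - eps) < 0) by (rewrite <- ln_1; apply ln_increasing; lra).
  assert (ln (/ (1 - eps)) < / (1 - eps) - 1) by (apply ln_lt_xm1; [apply Rinv_0_lt_compat; lra|]; 
     intro E; assert (1 - eps = 1) by (rewrite <- (Rinv_inv (1 - eps)), E; apply Rinv_1); lra).
  rewrite ln_Rinv in H by lra.
  split.
  - apply Rdiv_lt_0_compat; nra.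
  - apply Rmult_lt_reg_r with eps. lra. unfold Rdiv. rewrite Rmult_assoc, Rinv_l by lra.
    assert (- ln (1 - eps) * (1 - eps) < (/ (1 - eps) - 1) * (1 - eps)) by (apply Rmult_lt_compat_r; lra).
    replace ((/ (1 - eps) - 1) * (1 - eps)) with eps in H0 by (field; lra). lra.
Qed.

Lemma Rdiv_le_0_compat x y : 0 <= x -> 0 < y -> 0 <= x / y.
Proof. intros; unfold Rdiv; apply Rmult_le_pos; [lra|left; apply Rinv_0_lt_compat; lra]. Qed.

Lemma ln2_le : 0 <= ln 2 <= 1.
Proof. split. rewrite <- ln_1; apply ln_le; lra. pose proof (ln_le_xm1 2); lra. Qed.
Lemma ln3_le : 0 <= ln 3 <= 2.
Proof. split. rewrite <- ln_1; apply ln_le; lra. pose proof (ln_le_xm1 3); lra. Qed.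

Section Asym.
Variables lam c c5 rho eps L l Dl x0 N a K : R.
Hypothesis Hlam : 0 < lam.
Hypothesis Hc : 0 < c <= 1/2.
Hypothesis Hc5a : c5 <= 1/10.
Hypothesis Hc5b : c5 * lam <= c / 2.
Hypothesis Hc5c : c5 * lam <= (1 - c) / 2.
Hypothesis Hrho : 0 <= rho <= c.
Hypothesis Heps : 0 < eps < 1.
Hypothesis HD : 0 <= Dl < 1.
Hypothesis Hx0 : 0 <= x0 <= Dl.
Hypothesis HL1 : 3 <= L.
Hypothesis Hl : l = ln L.
Hypothesis HN : 0 < N.
Hypothesis HlnN : ln N = lam * L.
Hypothesis Ha : a = 2*L - 2*l/lam - 2*ln 2/lam + 1 - Dl.
Hypothesis HK : N / (a - 1 + Dl - x0 - eps) <= K < N / (a - 1 + Dl - x0 - eps) + 1.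
Hypothesis LC1 : 2*l/lam + 2/lam + 2 <= L.
Hypothesis LC2 : 3*L <= N /\ 9*L*L < N * (1 - eps).
Hypothesis LC3 : 11 + lam + 2*l <= 9/10 * lam * L.
Hypothesis LC4 : 31/2 + 3*lam + 4*l <= 9/10 * lam * L.
Hypothesis LC5 : L/2 + 2 + 16/10*lam*L + 4*L + 2*L*l <= lam*L*L/2.
Hypothesis LC6 : L/2 + 3 + 16/10*lam*L + 3*(L+1)*(2+l) <= lam*L*L/2.
Hypothesis LC7 : 2*l/lam + 8*l + 2/lam + 39/2 + 3*lam <= 3/2 * c * L.

Lemma l_nonneg : 0 <= l.
Proof. rewrite Hl, <- ln_1. apply ln_le; lra. Qed.

Definition gm := 2*L - 2*l/lam - 2*ln 2/lam.

Lemma gm_bounds : L + 2 <= gm <= 2*L.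
Proof.
  pose proof l_nonneg. pose proof ln2_le. unfold gm.
  assert (0 <= l/lam) by (apply Rdiv_le_0_compat; lra).
  assert (0 <= ln 2/lam) by (apply Rdiv_le_0_compat; lra).
  assert (ln 2 / lam <= 1/lam) by (apply Rmult_le_compat_r; [left; apply Rinv_0_lt_compat|]; lra).
  lra.
Qed.

Lemma a_bounds : L + 2 <= a <= 2*L + 1.
Proof. pose proof gm_bounds. unfold gm in H. lra. Qed.

Lemma a_pos : 0 < a.
Proof. pose proof a_bounds; lra. Qed.

Let g := a - 1 + Dl - x0 - eps.
Lemma g_bounds : L <= g <= 2*L.
Proof. pose proof gm_bounds. unfold g, gm in *. lra. Qed.

Lemma K_pos : 1 <= K.
Proof.
  pose proof g_bounds. destruct LC2. fold g in HK.
  assert (1 <= N / g). { apply Rmult_le_reg_r with g. lra. unfold Rdiv. rewrite Rmult_assoc, Rinv_l by lra. lra. }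
  lra.
Qed.

Lemma lk_bound : ln K <= ln 2 + lam * L - l.
Proof.
  pose proof g_bounds. destruct LC2. fold g in HK. pose proof K_pos.
  assert (1 <= N / g). { apply Rmult_le_reg_r with g. lra. unfold Rdiv. rewrite Rmult_assoc, Rinv_l by lra. lra. }
  assert (K <= 2 * N / L).
  { assert (N / g <= N / L). { apply Rmult_le_compat_l. lra. apply Rinv_le_contravar; lra. }
    unfold Rdiv in *. lra. }
  eapply Rle_trans. apply ln_le. lra. exact H4.
  rewrite ln_div, ln_mult by lra. rewrite HlnN, Hl. lra.
Qed.

Lemma NK_bound : a - 2 < N / K.
Proof.
  pose proof g_bounds. pose proof a_bounds. destruct LC2. fold g in HK. pose proof K_pos.
  assert (K < (N + g) / g) by (replace ((N+g)/g) with (N/g + 1) by (field; lra); lra).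
  assert (N * g / (N + g) < N / K).
  { apply Rmult_lt_reg_r with ((N+g)/g * K). apply Rmult_lt_0_compat. apply Rdiv_lt_0_compat; lra. lra.
    replace (N * g / (N + g) * ((N + g) / g * K)) with (N * K) by (field; lra).
    replace (N / K * ((N + g) / g * K)) with (N * ((N + g) / g)) by (field; lra).
    apply Rmult_lt_compat_l; lra. }
  assert (a - 2 <= N * g / (N + g)).
  { apply Rmult_le_reg_r with (N + g). lra.
    replace (N * g / (N + g) * (N + g)) with (N * g) by (field; lra).
    assert (g - a + 2 >= 1 - eps) by (unfold g; lra).
    assert ((a - 2) * g <= (3 * L) * (3 * L)) by (apply Rmult_le_compat; lra).
    assert (N * (1 - eps) <= N * (g - a + 2)) by (apply Rmult_le_compat_l; lra).
    lra. }
  lra.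
Qed.

Lemma la_bounds : 0 <= ln a <= 2 + l.
Proof.
  pose proof a_bounds. pose proof ln3_le. split.
  rewrite <- ln_1; apply ln_le; lra.
  apply Rle_trans with (ln (3 * L)). apply ln_le; lra.
  rewrite ln_mult, Hl by lra. lra.
Qed.

Lemma la_tangent : ln a - l - ln 2 <= 1 / (2 * L).
Proof.
  pose proof a_bounds.
  assert (ln a - l - ln 2 = ln (a / (2 * L))) by (rewrite ln_div, ln_mult, Hl by lra; ring).
  rewrite H0. eapply Rle_trans. apply ln_le_xm1. apply Rdiv_lt_0_compat; lra.
  apply Rmult_le_reg_r with (2 * L). lra.
  replace ((a / (2 * L) - 1) * (2 * L)) with (a - 2 * L) by (field; lra).
  replace (1 / (2 * L) * (2 * L)) with 1 by (field; lra). lra.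
Qed.


Lemma c5lam : c5 * (lam * L) <= 1/10 * (lam * L).
Proof. apply Rmult_le_compat_r; [|lra]. apply Rmult_le_pos; lra. Qed.

Lemma H2_bound : Hf rho lam (ln N) (ln a) (ln K) 2 <= (1 - c5) * ln N.
Proof.
  pose proof lk_bound as B1. pose proof la_bounds as B2. pose proof ln2_le as B3.
  pose proof l_nonneg as B4. pose proof c5lam as B5.
  unfold Hf. rewrite HlnN. clear - B1 B2 B3 B4 B5 Hrho Hc LC3. lra.
Qed.

Lemma H3_bound : Hf rho lam (ln N) (ln a) (ln K) 3 <= - c5 * ln N.
Proof.
  pose proof lk_bound as B1. pose proof la_bounds as B2. pose proof ln2_le as B3.
  pose proof l_nonneg as B4. pose proof c5lam as B5.
  unfold Hf. rewrite HlnN. clear - B1 B2 B3 B4 B5 Hrho Hc LC4. lra.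
Qed.

Lemma HL_bound : Hf rho lam (ln N) (ln a) (ln K) L <= - c5 * ln N.
Proof.
  pose proof lk_bound as B1. pose proof la_bounds as B2. pose proof ln2_le as B3.
  pose proof l_nonneg as B4. pose proof c5lam as B5.
  assert (B6 : rho * L <= L / 2) by (apply Rle_trans with (1/2 * L); [apply Rmult_le_compat_r|]; lra).
  assert (B7 : L * ln a <= L * (2 + l)) by (apply Rmult_le_compat_l; lra).
  unfold Hf. rewrite HlnN. clear - B1 B2 B3 B4 B5 B6 B7 HL1 LC5. lra.
Qed.

Lemma GL_bound : Gf rho lam (ln N) a (ln a) (ln K) L <= - c5 * ln N.
Proof.
  pose proof lk_bound as B1. pose proof la_bounds as B2. pose proof ln2_le as B3.
  pose proof l_nonneg as B4. pose proof c5lam as B5. pose proof a_bounds as B0.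
  assert (B6 : rho * L <= L / 2) by (apply Rle_trans with (1/2 * L); [apply Rmult_le_compat_r|]; lra).
  assert (B7 : (a - L) * ln a <= (L + 1) * (2 + l)) by (apply Rmult_le_compat; lra).
  assert (B8 : L / a <= 1) by (apply Rmult_le_reg_r with a; [lra|]; unfold Rdiv; rewrite Rmult_assoc, Rinv_l; lra).
  assert (B9 : (L + 1) * (ln a + L / a - 1) <= (L + 1) * (2 + l)) by (apply Rmult_le_compat_l; lra).
  unfold Gf. rewrite HlnN. clear - B1 B2 B3 B4 B5 B6 B7 B9 HL1 LC6. lra.
Qed.

Lemma GE_bound j : 0 <= j <= 2 ->
  Gf rho lam (ln N) a (ln a) (ln K) (a - j) <=
  lam * L * (2 - Dl - j) - 2 * (1 - rho) * L + (2*l/lam + 8*l + 2/lam + 39/2 + 3*lam).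
Proof.
  intros Hj.
  pose proof lk_bound. pose proof la_bounds. pose proof ln2_le. pose proof l_nonneg. pose proof a_bounds.
  pose proof la_tangent. pose proof gm_bounds.
  set (i := a - j).
  assert (Hi : gm - 2 <= i <= 3 * L) by (unfold i, gm; lra).
  set (Kc := 1 - rho + (Dl + j) * lam / 2).
  assert (HKc : 0 <= Kc <= 1 + 3/2*lam).
  { assert (HH : 0 <= (Dl + j) * lam <= 3 * lam). split. apply Rmult_le_pos; lra.
      apply Rmult_le_compat_r; lra.
    unfold Kc. clear - HH Hrho Hc. lra. }
  assert (E1 : Gf rho lam (ln N) a (ln a) (ln K) i =
     i * (rho - 1 - (Dl + j) * lam / 2 + (ln a - l - ln 2)) + 2 * ln K + (2*j+1) * ln a + 1
     - (i + 1) * (j / a)).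
  { assert (HLL : lam * L = (a - 1 + Dl) * lam / 2 + l + ln 2) by (rewrite Ha; field; lra).
    unfold Gf. rewrite HlnN, HLL. unfold i. field. lra. }
  assert (E2 : 0 <= (i + 1) * (j / a)).
  { apply Rmult_le_pos. lra. apply Rdiv_le_0_compat; lra. }
  assert (E3 : i * (ln a - l - ln 2) <= 3/2).
  { apply Rle_trans with (i * (1 / (2 * L))). apply Rmult_le_compat_l; lra.
    apply Rmult_le_reg_r with (2 * L). lra.
    replace (i * (1 / (2 * L)) * (2 * L)) with i by (field; lra). lra. }
  assert (E4 : - Kc * i <= - Kc * (gm - 2)).
  { assert (Kc * (gm - 2) <= Kc * i) by (apply Rmult_le_compat_l; lra). lra. }
  assert (E5 : (2*j+1) * ln a <= 5 * (2 + l)) by (apply Rmult_le_compat; lra).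
  assert (E6 : Kc * (2*l/lam + 2*ln 2/lam + 2) <= (1 + 3/2*lam) * (2*l/lam + 2/lam + 2)).
  { assert (0 <= l/lam) by (apply Rdiv_le_0_compat; lra).
    assert (0 <= ln 2/lam) by (apply Rdiv_le_0_compat; lra).
    assert (ln 2 / lam <= 1/lam) by (apply Rmult_le_compat_r; [left; apply Rinv_0_lt_compat|]; lra).
    apply Rmult_le_compat; lra. }
  assert (E7 : (1 + 3/2*lam) * (2*l/lam + 2/lam + 2) = 2*l/lam + 3*l + 2/lam + 5 + 3 * lam)
    by (field; lra).
  assert (E8 : - Kc * (gm - 2) = - Kc * (2 * L) + Kc * (2*l/lam + 2*ln 2/lam + 2)) by (unfold gm; field; lra).
  assert (E9 : - Kc * (2 * L) = lam * L * (2 - Dl - j) - 2 * (1 - rho) * L - 2 * lam * L) by (unfold Kc; field).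
  rewrite E1.
  replace (i * (rho - 1 - (Dl + j) * lam / 2 + (ln a - l - ln 2))) with (- Kc * i + i * (ln a - l - ln 2))
    by (unfold Kc; field).
  clear - E2 E3 E4 E5 E6 E7 E8 E9 H H1 H2. lra.
Qed.

Lemma GA_bound : Gf rho lam (ln N) a (ln a) (ln K) (a - 2) <= - c5 * ln N.
Proof.
  pose proof (GE_bound 2 ltac:(lra)). rewrite HlnN in H |- *.
  assert (c5 * lam * L <= (1 - c) / 2 * L) by (apply Rmult_le_compat_r; lra).
  assert (0 <= lam * L * Dl) by (apply Rmult_le_pos; [apply Rmult_le_pos|]; lra).
  assert (rho * L <= c * L) by (apply Rmult_le_compat_r; lra).
  assert (c * L <= (1 - c) * L) by (apply Rmult_le_compat_r; lra).
  clear - H H0 H1 H2 H3 LC7. lra.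
Qed.

Lemma GC_bound : Gf rho lam (ln N) a (ln a) (ln K) (a - 1) <= (1 - c5) * ln N.
Proof.
  pose proof (GE_bound 1 ltac:(lra)). rewrite HlnN in H |- *.
  assert (c5 * lam * L <= (1 - c) / 2 * L) by (apply Rmult_le_compat_r; lra).
  assert (0 <= lam * L * Dl) by (apply Rmult_le_pos; [apply Rmult_le_pos|]; lra).
  assert (rho * L <= c * L) by (apply Rmult_le_compat_r; lra).
  assert (c * L <= (1 - c) * L) by (apply Rmult_le_compat_r; lra).
  clear - H H0 H1 H2 H3 LC7. lra.
Qed.

Lemma bundleA :
  1 <= K /\ a - 2 < N / K /\ L + 2 <= a <= 2*L + 1 /\
  Hf rho lam (ln N) (ln a) (ln K) 2 <= (1 - c5) * ln N /\
  Hf rho lam (ln N) (ln a) (ln K) 3 <= - c5 * ln N /\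
  Hf rho lam (ln N) (ln a) (ln K) L <= - c5 * ln N /\
  Gf rho lam (ln N) a (ln a) (ln K) L <= - c5 * ln N /\
  Gf rho lam (ln N) a (ln a) (ln K) (a - 2) <= - c5 * ln N /\
  Gf rho lam (ln N) a (ln a) (ln K) (a - 1) <= (1 - c5) * ln N.
Proof using All.
  repeat split; auto using K_pos, NK_bound, H2_bound, H3_bound, HL_bound, GL_bound, GA_bound, GC_bound;
  apply a_bounds.
Qed.

Hypothesis Hx0b : (1 - Dl) * lam <= 2 * (1 - 2 * c).

Lemma GB_bound : Gf rho lam (ln N) a (ln a) (ln K) (a - 1) <= - c5 * ln N.
Proof.
  pose proof (GE_bound 1 ltac:(lra)). rewrite HlnN in H |- *.
  assert (c5 * lam * L <= c / 2 * L) by (apply Rmult_le_compat_r; lra).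
  assert ((1 - Dl) * lam * L <= 2 * (1 - 2 * c) * L) by (apply Rmult_le_compat_r; lra).
  assert (rho * L <= c * L) by (apply Rmult_le_compat_r; lra).
  clear - H H0 H1 H2 LC7. lra.
Qed.

Lemma GD_bound : Gf rho lam (ln N) a (ln a) (ln K) (a - 0) <= (1 - c5) * ln N.
Proof.
  pose proof (GE_bound 0 ltac:(lra)). rewrite HlnN in H |- *.
  assert (c5 * lam * L <= c / 2 * L) by (apply Rmult_le_compat_r; lra).
  assert ((1 - Dl) * lam * L <= 2 * (1 - 2 * c) * L) by (apply Rmult_le_compat_r; lra).
  assert (rho * L <= c * L) by (apply Rmult_le_compat_r; lra).
  clear - H H0 H1 H2 LC7. lra.
Qed.

Lemma bundleB :
  Gf rho lam (ln N) a (ln a) (ln K) (a - 1) <= - c5 * ln N /\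
  Gf rho lam (ln N) a (ln a) (ln K) (a - 0) <= (1 - c5) * ln N.
Proof using All. split; auto using GB_bound, GD_bound. Qed.

End Asym.


Lemma thr C0 C1 d s : 0 <= C0 -> 0 <= C1 -> 0 < d -> 1 <= s -> (C0 + C1) / d <= s ->
  C0 + C1 * s <= d * (s * s).
Proof.
  intros H0 H1 Hd Hs Ht.
  assert (C0 + C1 <= d * s).
  { apply Rmult_le_compat_l with (r := d) in Ht; [|lra].
    replace (d * ((C0 + C1) / d)) with (C0 + C1) in Ht by (field; lra). lra. }
  assert ((C0 + C1) * s <= d * s * s) by (apply Rmult_le_compat_r; lra).
  assert (C0 <= C0 * s) by (rewrite <- (Rmult_1_r C0) at 1; apply Rmult_le_compat_l; lra).
  lra.
Qed.

Lemma exp_cube x : 0 <= x -> x * x * x / 27 <= exp x.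
Proof.
  intros Hx.
  assert (E : exp x = exp (x/3) * exp (x/3) * exp (x/3)) by (rewrite <- !exp_plus; f_equal; field).
  pose proof (exp_ineq1_le (x/3)).
  assert (0 <= x/3) by lra.
  rewrite E. replace (x * x * x / 27) with ((x/3) * (x/3) * (x/3)) by field.
  apply Rmult_le_compat; try apply Rmult_le_pos; try lra.
  apply Rmult_le_compat; lra.
Qed.

Lemma largeness lam c eps : 0 < lam -> 0 < c -> 0 < eps < 1 ->
  exists S0, 1 <= S0 /\ forall L, S0 * S0 <= L ->
  let l := ln L in let N := exp (lam * L) in
  3 <= L /\
  2*l/lam + 2/lam + 2 <= L /\
  (3*L <= N /\ 9*L*L < N * (1 - eps)) /\
  11 + lam + 2*l <= 9/10 * lam * L /\
  31/2 + 3*lam + 4*l <= 9/10 * lam * L /\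
  L/2 + 2 + 16/10*lam*L + 4*L + 2*L*l <= lam*L*L/2 /\
  L/2 + 3 + 16/10*lam*L + 3*(L+1)*(2+l) <= lam*L*L/2 /\
  2*l/lam + 8*l + 2/lam + 39/2 + 3*lam <= 3/2 * c * L.
Proof.
  intros Hl Hc He.
  assert (Hil : 0 < / lam) by (apply Rinv_0_lt_compat; lra).
  assert (Hl3 : 0 < lam * lam * lam) by (repeat apply Rmult_lt_0_compat; lra).
  set (T := 243 / (lam * lam * lam * (1 - eps))).
  set (t1 := ((2/lam + 2) + 4/lam) / 1).
  set (t3 := ((11 + lam) + 4) / (9/10*lam)).
  set (t4 := ((31/2 + 3*lam) + 8) / (9/10*lam)).
  set (t5 := ((13/2 + 16/10*lam) + 4) / (lam/2)).
  set (t6 := ((31/2 + 16/10*lam) + 12) / (lam/2)).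
  set (t7 := ((2/lam + 39/2 + 3*lam) + (4/lam + 16)) / (3/2*c)).
  exists (Rmax 2 (Rmax (T+1) (Rmax t1 (Rmax t3 (Rmax t4 (Rmax t5 (Rmax t6 t7))))))).
  split. { eapply Rle_trans; [|apply Rmax_l]; lra. }
  intros L HL l N.
  set (S0 := Rmax 2 (Rmax (T+1) (Rmax t1 (Rmax t3 (Rmax t4 (Rmax t5 (Rmax t6 t7))))))) in *.
  assert (M2 : 2 <= S0) by apply Rmax_l.
  assert (MT : T + 1 <= S0) by (eapply Rle_trans; [|apply Rmax_r]; apply Rmax_l).
  assert (M1 : t1 <= S0) by (eapply Rle_trans; [|apply Rmax_r]; eapply Rle_trans; [|apply Rmax_r]; apply Rmax_l).
  assert (M3 : t3 <= S0) by (do 3 (eapply Rle_trans; [|apply Rmax_r]); apply Rmax_l).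
  assert (M4 : t4 <= S0) by (do 4 (eapply Rle_trans; [|apply Rmax_r]); apply Rmax_l).
  assert (M5 : t5 <= S0) by (do 5 (eapply Rle_trans; [|apply Rmax_r]); apply Rmax_l).
  assert (M6 : t6 <= S0) by (do 6 (eapply Rle_trans; [|apply Rmax_r]); apply Rmax_l).
  assert (M7 : t7 <= S0) by (do 6 (eapply Rle_trans; [|apply Rmax_r]); apply Rmax_r).
  clearbody S0.
  set (s := sqrt L).
  assert (HL0 : 0 <= L) by nra.
  assert (Hss : s * s = L) by (apply sqrt_sqrt; lra).
  assert (Hs : S0 <= s).
  { unfold s. rewrite <- (sqrt_square S0) by lra. apply sqrt_le_1_alt. lra. }
  assert (Hs1 : 1 <= s) by lra.
  assert (Hlnl : 0 <= l <= 2 * s).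
  { unfold l. rewrite <- Hss. rewrite ln_mult by lra. pose proof (ln_le_xm1 s ltac:(lra)). split.
    assert (0 <= ln s) by (rewrite <- ln_1; apply ln_le; lra). lra. lra. }
  assert (HL1 : s <= L) by nra.
  assert (Dl1 : l / lam <= 2 * s / lam) by (apply Rmult_le_compat_r; lra).
  assert (Dl1' : 2 * l / lam <= 4 * s / lam) by (unfold Rdiv in *; lra).
  assert (Ft1 : t1 <= s) by lra.
  assert (Ft3 : t3 <= s) by lra.
  assert (Ft4 : t4 <= s) by lra.
  assert (Ft5 : t5 <= s) by lra.
  assert (Ft6 : t6 <= s) by lra.
  assert (Ft7 : t7 <= s) by lra.
  assert (Ts : T < L) by lra.
  clear M1 M3 M4 M5 M6 M7 MT.
  repeat split.
  - nra.
  - pose proof (thr (2/lam+2) (4/lam) 1 s ltac:(unfold Rdiv in *; nra) ltac:(unfold Rdiv in *; nra) ltac:(lra) Hs1 Ft1).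
    unfold Rdiv in *. nra.
  - assert (P : 243 < lam*lam*lam*L*(1-eps)).
    { unfold T in Ts. apply Rmult_lt_compat_r with (r := lam*lam*lam*(1-eps)) in Ts.
      replace (243 / (lam * lam * lam * (1 - eps)) * (lam * lam * lam * (1 - eps))) with 243 in Ts by (field; nra).
      lra. apply Rmult_lt_0_compat; lra. }
    assert (Q : lam*L*(lam*L)*(lam*L)/27 <= N) by (apply exp_cube; nra).
    assert (P2 : lam*lam*lam*L*(1-eps) <= lam*lam*lam*L) by nra.
    assert (P3 : 243 * (L*L) <= lam*lam*lam*L*(L*L)) by (apply Rmult_le_compat_r; nra).
    nra.
  - assert (P : 243 < lam*lam*lam*L*(1-eps)).
    { unfold T in Ts. apply Rmult_lt_compat_r with (r := lam*lam*lam*(1-eps)) in Ts.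
      replace (243 / (lam * lam * lam * (1 - eps)) * (lam * lam * lam * (1 - eps))) with 243 in Ts by (field; nra).
      lra. apply Rmult_lt_0_compat; lra. }
    assert (Q : lam*L*(lam*L)*(lam*L)/27 <= N) by (apply exp_cube; nra).
    assert (P3 : 243 * (L*L) < lam*lam*lam*L*(1-eps)*(L*L)) by (apply Rmult_lt_compat_r; nra).
    assert (Q2 : lam*L*(lam*L)*(lam*L)/27 * (1-eps) <= N * (1-eps)) by (apply Rmult_le_compat_r; lra).
    nra.
  - pose proof (thr (11+lam) 4 (9/10*lam) s ltac:(lra) ltac:(lra) ltac:(lra) Hs1 Ft3). nra.
  - pose proof (thr (31/2+3*lam) 8 (9/10*lam) s ltac:(lra) ltac:(lra) ltac:(lra) Hs1 Ft4). nra.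
  - pose proof (thr (13/2+16/10*lam) 4 (lam/2) s ltac:(lra) ltac:(lra) ltac:(lra) Hs1 Ft5) as H.
    rewrite Hss in H.
    assert (L * (13/2+16/10*lam + 4 * s) <= L * (lam/2*L)) by (apply Rmult_le_compat_l; lra).
    assert (L * l <= L * (2 * s)) by (apply Rmult_le_compat_l; lra).
    nra.
  - pose proof (thr (31/2+16/10*lam) 12 (lam/2) s ltac:(lra) ltac:(lra) ltac:(lra) Hs1 Ft6) as H.
    rewrite Hss in H.
    assert (L * (31/2+16/10*lam + 12 * s) <= L * (lam/2*L)) by (apply Rmult_le_compat_l; lra).
    assert ((L + 1) * (2 + l) <= (2 * L) * (2 + 2 * s)) by (apply Rmult_le_compat; lra).
    nra.
  - pose proof (thr (2/lam + 39/2 + 3*lam) (4/lam + 16) (3/2*c) s ltac:(unfold Rdiv in *; nra) ltac:(unfold Rdiv in *; nra) ltac:(lra) Hs1 Ft7).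
    unfold Rdiv in *. nra.
Qed.

Lemma INR_Z2N z : (0 <= z)%Z -> INR (Z.to_nat z) = IZR z.
Proof. intro. rewrite INR_IZR_INZ, Z2Nat.id; auto. Qed.

Theorem lemma10 (p eps : R) (x0 : nat -> R) :
  0 < p < 1 -> 0 < eps < 1 ->
  (forall n, is_x0 p n (x0 n)) ->
  exists N : nat, forall n : nat, (N <= n)%nat ->
    forall rho : R, 0 <= rho <= cc eps ->
    let k := Z.to_nat (kZ p eps (x0 n) n) in
    let a := Z.to_nat (aZ p n) in
    let m := Rceil (INR n / INR k) in
    (forall i : nat, (3 <= Z.of_nat i <= m - 1)%Z ->
       Tq p rho n k a i <= Rpower (INR n) (- c5 p eps)) /\
    (forall i : nat, (Z.of_nat i = 2 \/ Z.of_nat i = m)%Z ->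
       Tq p rho n k a i <= Rpower (INR n) (1 - c5 p eps)).
Proof.
  intros Hp He Hx0.
  pose proof (lam_pos p Hp) as Hlam. set (lam := ln (bb p)) in *.
  pose proof (c2_range eps He) as Hc2.
  assert (Hc : 0 < cc eps <= 1/2) by (unfold cc; lra).
  assert (Hc2c : c2 eps = 1 - 2 * cc eps) by (unfold cc; lra).
  set (c := cc eps) in *.
  assert (Hc5a : c5 p eps <= 1/10) by (unfold c5; apply Rmin_l).
  assert (Hc5b : c5 p eps * lam <= c / 2).
  { assert (c5 p eps <= c / (2 * lam)) by (unfold c5; eapply Rle_trans; [apply Rmin_r|]; apply Rmin_l).
    apply Rmult_le_compat_r with (r := lam) in H; [|lra].
    replace (c / (2 * lam) * lam) with (c / 2) in H by (field; lra). exact H. }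
  assert (Hc5c : c5 p eps * lam <= (1 - c) / 2).
  { assert (c5 p eps <= (1 - c) / (2 * lam)) by (unfold c5; eapply Rle_trans; [apply Rmin_r|]; apply Rmin_r).
    apply Rmult_le_compat_r with (r := lam) in H; [|lra].
    replace ((1 - c) / (2 * lam) * lam) with ((1 - c) / 2) in H by (field; lra). exact H. }
  set (c5' := c5 p eps) in *.
  destruct (largeness lam c eps Hlam ltac:(lra) He) as [S0 [HS0 HLg]].
  assert (Hup : 0 < IZR (up (exp (lam * (S0 * S0))))).
  { destruct (archimed (exp (lam * (S0 * S0)))). pose proof (exp_pos (lam * (S0 * S0))). lra. }
  exists (Z.to_nat (up (exp (lam * (S0 * S0))))).
  intros n Hn rho Hrho k a m.
  assert (HNge : exp (lam * (S0 * S0)) < INR n).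
  { apply le_INR in Hn. rewrite INR_Z2N in Hn by (apply le_IZR; lra).
    destruct (archimed (exp (lam * (S0 * S0)))). lra. }
  assert (HN : 0 < INR n) by (pose proof (exp_pos (lam * (S0 * S0))); lra).
  assert (Hn1 : (1 <= n)%nat) by (destruct n; [simpl in HN; lra | lia]).
  set (L := ln (INR n) / lam).
  assert (HlnN : ln (INR n) = lam * L) by (unfold L; field; lra).
  assert (HLS : S0 * S0 <= L).
  { assert (lam * (S0 * S0) < ln (INR n)).
    { rewrite <- (ln_exp (lam * (S0 * S0))). apply ln_increasing; auto. apply exp_pos. }
    unfold L. apply Rmult_le_reg_l with lam; auto. replace (lam * (ln (INR n) / lam)) with (ln (INR n)) by (field; lra).
    lra. }
  destruct (HLg L HLS) as [HL3 [LC1 [LC2 [LC3 [LC4 [LC5 [LC6 LC7]]]]]]].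
  assert (HexpN : exp (lam * L) = INR n) by (rewrite <- HlnN; apply exp_ln; auto).
  rewrite HexpN in LC2.
  set (l := ln L) in *.
  assert (Hgam : gam p n = 2*L - 2*l/lam - 2*ln 2/lam) by (unfold gam, logb; fold lam; fold L; fold l; field; lra).
  pose proof (Delta_range p n) as HD.
  pose proof ln2_le as Hln2.
  assert (Hgl : L + 2 <= gam p n).
  { rewrite Hgam. assert (ln 2 / lam <= 1 / lam) by (apply Rmult_le_compat_r; [left; apply Rinv_0_lt_compat|]; lra).
    unfold Rdiv in *. lra. }
  destruct (Rfloor_spec (gam p n)) as [Hf1 Hf2].
  assert (Hfl0 : (0 <= Rfloor (gam p n))%Z).
  { assert (0 < IZR (Rfloor (gam p n)) + 1) by lra.
    assert (-1 < Rfloor (gam p n))%Z by (apply lt_IZR; lra). lia. }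
  assert (HaR : INR a = 2*L - 2*l/lam - 2*ln 2/lam + 1 - Delta p n).
  { unfold a, aZ. rewrite INR_Z2N by lia. rewrite plus_IZR. unfold Delta. rewrite <- Hgam. simpl. lra. }
  destruct (Hx0 n) as [Hx00 _].
  pose proof (x0_le_Delta p n (x0 n) Hp (Hx0 n)) as Hx0D.
  assert (Hgeq : gam p n - x0 n - eps = INR a - 1 + Delta p n - x0 n - eps) by (rewrite HaR, Hgam; ring).
  assert (Hgpos : 0 < gam p n - x0 n - eps) by lra.
  destruct (Rceil_spec (INR n / (gam p n - x0 n - eps))) as [Hk1 Hk2].
  assert (HNg : 0 < INR n / (gam p n - x0 n - eps)) by (apply Rdiv_lt_0_compat; lra).
  assert (Hk0 : (0 <= kZ p eps (x0 n) n)%Z).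
  { assert (-1 < kZ p eps (x0 n) n)%Z by (apply lt_IZR; unfold kZ; lra). lia. }
  assert (HkR : INR k = IZR (kZ p eps (x0 n) n)) by (unfold k; apply INR_Z2N; auto).
  assert (HK : INR n / (INR a - 1 + Delta p n - x0 n - eps) <= INR k <
               INR n / (INR a - 1 + Delta p n - x0 n - eps) + 1).
  { rewrite HkR, <- Hgeq. unfold kZ. lra. }
  pose proof (bundleA lam c c5' rho eps L l (Delta p n) (x0 n) (INR n) (INR a) (INR k)
    Hlam Hc Hc5a Hc5b Hc5c Hrho He HD (conj Hx00 Hx0D) HL3 eq_refl HN HlnN HaR HK
    LC1 LC2 LC3 LC4 LC5 LC6 LC7) as [BK [BNK [Ba [BH2 [BH3 [BHL [BGL [BGA BGC]]]]]]]].
  assert (HKp : 0 < INR k) by lra.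
  assert (Hkn : (1 <= k)%nat) by (destruct k; [simpl in HKp; lra | lia]).
  assert (Ha1 : (1 <= a)%nat) by (destruct a; [simpl in Ba; lra | lia]).
  set (g := INR a - 1 + Delta p n - x0 n - eps) in *.
  assert (Hgp : 0 < g) by (unfold g; lra).
  assert (HNKg : INR n / INR k <= g).
  { apply Rmult_le_reg_r with (INR k); auto. unfold Rdiv. rewrite Rmult_assoc, Rinv_l by lra.
    destruct HK as [HK1 _]. apply Rmult_le_compat_l with (r := g) in HK1; [|lra].
    replace (g * (INR n / g)) with (INR n) in HK1 by (field; lra). lra. }
  destruct (Rceil_spec (INR n / INR k)) as [Hm1 Hm2]. fold m in Hm1, Hm2.
  assert (HaZ : INR a = IZR (Z.of_nat a)) by apply INR_IZR_INZ.
  assert (Hmle : (m <= Z.of_nat a)%Z).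
  { assert (IZR m < IZR (Z.of_nat a + 1)) by (rewrite plus_IZR; unfold g in HNKg; lra).
    apply lt_IZR in H. lia. }
  assert (Hmge : (Z.of_nat a - 1 <= m)%Z).
  { assert (IZR (Z.of_nat a - 2) < IZR m) by (rewrite minus_IZR; lra).
    apply lt_IZR in H. lia. }
  assert (HRp : forall t, Rpower (INR n) t = exp (t * ln (INR n))) by reflexivity.
  assert (Core : forall (j i : nat), (1 <= j <= 2)%nat -> (3 <= i)%nat -> (i + j <= a)%nat ->
     Gf rho lam (ln (INR n)) (INR a) (ln (INR a)) (ln (INR k)) (INR a - INR j) <= - c5' * ln (INR n) ->
     Tq p rho n k a i <= Rpower (INR n) (- c5')).
  { intros j i Hj Hi3 Hija HGj. rewrite HRp.
    assert (Hi3R : 3 <= INR i) by (assert (INR 3 <= INR i) by (apply le_INR; lia); simpl in H; lra).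
    assert (HijR : INR i <= INR a - INR j).
    { assert (INR (i + j) <= INR a) by (apply le_INR; lia). rewrite plus_INR in H. lra. }
    destruct (Rle_lt_dec (INR i) L) as [HiL|HiL].
    - eapply Rle_trans. apply Tq_H; auto; lia. apply exp_le.
      apply (quad_max (Hf rho lam (ln (INR n)) (ln (INR a)) (ln (INR k))) (lam/2)
        (rho - lam/2 + 2*ln (INR a) - ln (INR n)) (2 * ln (INR k)) 3 L (INR i)); auto. lra.
      apply Hf_quad.
    - eapply Rle_trans. apply Tq_G; auto; lia. apply exp_le.
      assert (Hinv : 0 <= / INR a) by (left; apply Rinv_0_lt_compat; lra).
      apply (quad_max (Gf rho lam (ln (INR n)) (INR a) (ln (INR a)) (ln (INR k))) (lam/2 + / INR a)
        (rho - lam/2 - 2*ln (INR a) + (ln (INR a) - 1) + / INR a - 1 - ln (INR n))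
        (2*ln (INR k) + 2*INR a*ln (INR a) + ln (INR a)) L (INR a - INR j) (INR i)); auto. lra.
      apply Gf_quad. lra. lra. }
  assert (HmaR : m = Z.of_nat a -> (1 - Delta p n) * lam <= 2 * (1 - 2 * c)).
  { intro Hma. rewrite <- Hc2c. apply (x0_bound p eps n (x0 n) Hp He (Hx0 n)).
    rewrite Hma, <- HaZ in Hm2. unfold g in HNKg. lra. }
  assert (BB : m = Z.of_nat a ->
    Gf rho lam (ln (INR n)) (INR a) (ln (INR a)) (ln (INR k)) (INR a - 1) <= - c5' * ln (INR n) /\
    Gf rho lam (ln (INR n)) (INR a) (ln (INR a)) (ln (INR k)) (INR a - 0) <= (1 - c5') * ln (INR n)).
  { intro Hma. exact (bundleB lam c c5' rho eps L l (Delta p n) (x0 n) (INR n) (INR a) (INR k)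
    Hlam Hc Hc5a Hc5b Hc5c Hrho He HD (conj Hx00 Hx0D) HL3 eq_refl HN HlnN HaR HK
    LC1 LC2 LC3 LC4 LC5 LC6 LC7 (HmaR Hma)). }
  assert (Ha5 : (5 <= a)%nat).
  { assert (INR 4 < INR a) by (simpl; lra). apply INR_lt in H. lia. }
  split.
  - intros i [Hi3 Him].
    assert (Hi3' : (3 <= i)%nat) by lia.
    destruct (Z.eq_dec m (Z.of_nat a)) as [Hma|Hma].
    + apply (Core 1%nat i); try lia. simpl INR. apply (BB Hma).
    + apply (Core 2%nat i); try lia. simpl INR. replace (1 + 1) with 2 by ring. exact BGA.
  - intros i Hi. rewrite HRp.
    destruct Hi as [Hi2|Him].
    + assert (i = 2%nat) by lia. subst i.
      eapply Rle_trans. apply Tq_H; auto; lia. apply exp_le.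
      simpl INR. replace (1 + 1) with 2 by ring. exact BH2.
    + destruct (Z.eq_dec m (Z.of_nat a)) as [Hma|Hma].
      * assert (i = a) by lia. subst i.
        eapply Rle_trans. apply Tq_G; auto; lia. apply exp_le.
        pose proof (proj2 (BB Hma)) as X. rewrite Rminus_0_r in X. exact X.
      * assert (i = (a - 1)%nat) by lia. subst i.
        eapply Rle_trans. apply Tq_G; auto; lia. apply exp_le.
        rewrite minus_INR by lia. simpl INR. exact BGC.
Qed.
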